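(* Let $G=(V,E)$ be a finite graph and let $T$ be a set of orderings of $V$. Then there exists a strict partial order $\prec$ on $P_f(\mathbb{N}^+)$ such that $T=\{\mathrm{TBLS}(G,\prec,\tau) : \tau \text{ an ordering of } V\}$ if and only if there exists a labeling structure $S=(L,\prec_{GLS},l_0,\mathrm{UPLAB})$ such that $T$ equals the set of all orderings that can be produced by $\mathrm{GLS}(G,S)$.
   Context: $G$ has $n$ vertices; an ordering of $V$ is a bijection $\sigma:\{1,\dots,n\}\to V$. $P_f(\mathbb{N}^+)$ is the set of finite subsets of positive integers. $\mathrm{TBLS}(G,\prec,\tau)$ (for a strict partial order $\prec$ on $P_f(\mathbb{N}^+)$ and ordering $\tau$ of $V$) is the procedure: set $label(v)=\emptyset$ for every $v$; for $i=1,\dots,n$: let Eligible be the set of unnumbered vertices $x$ such that there is no unnumbered vertex $y$ with $label(x)\prec label(y)$; let $v$ be the first vertex of Eligible in $\tau$; set $\sigma(i)=v$ ($v$ becomes numbered); for every unnumbered neighbour $w$ of $v$ replace $label(w)$ by $label(w)\cup\{i\}$; output $\sigma$. A labeling structure is a quadruple $S=(L,\prec_{GLS},l_0,\mathrm{UPLAB})$ where $L$ is an arbitrary set, $\prec_{GLS}$ a strict partial order on $L$, $l_0\in L$, and $\mathrm{UPLAB}:L\times\mathbb{N}^+\to L$ a function. The General Label Search $\mathrm{GLS}(G,S)$ is the nondeterministic procedure: set $l(v)=l_0$ for every $v$; for $i=1,\dots,n$: let Eligible be the set of unnumbered vertices $v$ such that there is no unnumbered $y$ with $l(v)\prec_{GLS}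 l(y)$; choose any $v$ in Eligible; set $\sigma(i)=v$; for every unnumbered neighbour $w$ of $v$ set $l(w)=\mathrm{UPLAB}(l(w),i)$; output $\sigma$. The orderings produced by $\mathrm{GLS}(G,S)$ are all outputs over all possible choices. *)

(* Defs.v *)
From mathcomp Require Import all_boot.
From mathcomp Require Import finmap.
Set Implicit Arguments. Unset Strict Implicit. Unset Printing Implicit Defensive.
Local Open Scope fset_scope.

Definition strict_partial_order (A : Type) (lt : A -> A -> Prop) : Prop :=
  (forall x, ~ lt x x) /\ (forall x y z, lt x y -> lt y z -> lt x z).

Section LabelSearch.
Variables (V : finType) (e : rel V).

Definition simple_graph : Prop := irreflexive e /\ symmetric e.

(* An ordering sigma : {1..n} -> V (bijection) is represented by the
   sequence [sigma(1); ...; sigma(n)]. *)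
Definition ordering (s : seq V) : Prop := uniq s /\ size s = #|V|.

(* Label of vertex w (unnumbered) after the vertices p = [p_1;...;p_k] have
   been numbered 1..k in this order: starting from l0, for i = 1..k, if w is a
   neighbour of p_i, apply UPLAB(_, i). *)
Definition gls_label (L : Type) (l0 : L) (uplab : L -> nat -> L)
  (p : seq V) (w : V) : L :=
  foldl (fun l iv => if e iv.2 w then uplab l iv.1 else l) l0
        (zip (iota 1 (size p)) p).

Definition eligible (L : Type) (lt : L -> L -> Prop) (lab : V -> L)
  (p : seq V) (x : V) : Prop :=
  x \notin p /\ forall y, y \notin p -> ~ lt (lab x) (lab y).

Definition gls_output (L : Type) (lt : L -> L -> Prop) (l0 : L)
  (uplab : L -> nat -> L) (s : seq V) : Prop :=
  ordering s /\
  forall p v q, s = p ++ v :: q -> eligible lt (gls_label l0 uplab p) p v.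

Definition tbls_label (p : seq V) (w : V) : {fset nat} :=
  gls_label fset0 (fun l i => l `|` [fset i]) p w.

(* s = TBLS(G, lt, tau): at every step, the vertex chosen is the first
   vertex of Eligible with respect to tau. Since the procedure is
   deterministic, this relation is the graph of the procedure. *)
Definition tbls_output (lt : {fset nat} -> {fset nat} -> Prop)
  (tau s : seq V) : Prop :=
  ordering s /\
  forall p v q, s = p ++ v :: q ->
    eligible lt (tbls_label p) p v /\
    (forall x, eligible lt (tbls_label p) p x -> index v tau <= index x tau).

End LabelSearch.

(* Main.v *)
Require Import Defs.
From mathcomp Require Import all_boot.
From mathcomp Require Import finmap.
Set Implicit Arguments. Unset Strict Implicit. Unset Printing Implicit Defensive.

Local Open Scope fset_scope.

Lemma iota1S n : iota 1 n.+1 = rcons (iota 1 n) n.+1.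
Proof. by rewrite -cats1; have := iotaD 1 n 1; rewrite addn1 add1n. Qed.

Section Gen.
Variables (V : finType) (e : rel V).

Lemma ordering_mem (s : seq V) x : ordering s -> x \in s.
Proof.
case=> us ss; apply/negPn/negP => xs.
have u : uniq (x :: s) by rewrite /= xs us.
move/card_uniqP: u; rewrite /= ss => h.
have := max_card (mem (x :: s)); rewrite h; by rewrite ltnn.
Qed.

Definition outG L (lt : L -> L -> Prop) (lab : seq V -> V -> L) (s : seq V) :=
  ordering s /\ forall p v q, s = p ++ v :: q -> eligible lt (lab p) p v.

Definition toutG L (lt : L -> L -> Prop) (lab : seq V -> V -> L) (tau s : seq V) :=
  ordering s /\
  forall p v q, s = p ++ v :: q ->
    eligible lt (lab p) p v /\
    (forall x, eligible lt (lab p) p x -> index v tau <= index x tau).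

Lemma outG_iff L lt (lab : seq V -> V -> L) s :
  outG lt lab s <-> exists tau, ordering tau /\ toutG lt lab tau s.
Proof.
split.
- move=> [os H]; exists s; split => //; split => // p v q E; split; first exact: H E.
  move=> x [xp _].
  have xs := ordering_mem x os.
  case: os => us _.
  have vp : v \notin p by move: us; rewrite E cat_uniq /= => /and3P [_ /norP [] ].
  rewrite E !index_cat (negbTE vp) (negbTE xp) /= eqxx addn0 leq_addr //.
- by move=> [tau [_ [os H]]]; split => // p v q E; case: (H p v q E).
Qed.

Lemma outG_ext L L' (lt : L -> L -> Prop) (lt' : L' -> L' -> Prop) lab lab' s :
  (forall p x y, lt (lab p x) (lab p y) <-> lt' (lab' p x) (lab' p y)) ->
  outG lt lab s <-> outG lt' lab' s.
Proof.
move=> H; split => -[os K]; split => // p v q E; case: (K p v q E) => a b;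
 split => // y yp.
- move/H; exact: b.
- move/H; exact: b.
Qed.

Lemma gls_label_rcons L (l0 : L) uplab p x w :
  gls_label e l0 uplab (rcons p x) w =
  if e x w then uplab (gls_label e l0 uplab p w) (size p).+1
  else gls_label e l0 uplab p w.
Proof.
by rewrite /gls_label size_rcons iota1S zip_rcons ?size_iota // foldl_rcons.
Qed.

Lemma tbls_mem p w i :
  (i \in tbls_label e p w) = (0 < i <= size p) && e (nth w p i.-1) w.
Proof.
elim/last_ind: p i => [|p x IH] i.
  by rewrite /tbls_label /gls_label /= in_fset0 ?andbF ?ler0n; case: i.
rewrite /tbls_label gls_label_rcons -/(tbls_label e p w) size_rcons nth_rcons.
have E : (i \in (if e x w then tbls_label e p w `|` [fset (size p).+1] else tbls_label e p w))
   = (i \in tbls_label e p w) || ((i == (size p).+1) && e x w).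
  by case: (e x w); rewrite ?in_fsetU ?in_fset1 ?andbT ?andbF ?orbF.
rewrite E IH {E IH}.
case: i => [|i] //=; rewrite ltnS eqSS.
case: (ltngtP i (size p)) => hi; by rewrite /= ?orbF.
Qed.

Variables (L : Type) (l0 : L) (uplab : L -> nat -> L).

Definition Gf (A : {fset nat}) N :=
  foldl (fun l i => if i \in A then uplab l i else l) l0 (iota 1 N).

Lemma GfS A N : Gf A N.+1 = if N.+1 \in A then uplab (Gf A N) N.+1 else Gf A N.
Proof. by rewrite /Gf iota1S foldl_rcons. Qed.

Lemma Gf_gls A p w :
  (forall i, 0 < i <= size p -> (i \in A) = e (nth w p i.-1) w) ->
  Gf A (size p) = gls_label e l0 uplab p w.
Proof.
elim/last_ind: p => [|p x IH] H; first by [].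
rewrite size_rcons GfS gls_label_rcons IH.
  by rewrite H ?size_rcons ?leqnn //= nth_rcons ltnn eqxx.
move=> i /andP [i0 ip]; rewrite H ?size_rcons ?i0 ?(leq_trans ip) // nth_rcons.
by case: i i0 ip => // i _ /= ->.
Qed.

Lemma Gf_ext A M k : (forall i, i \in A -> i <= M) -> Gf A (M + k) = Gf A M.
Proof.
move=> H; elim: k => [|k IH]; first by rewrite addn0.
rewrite addnS GfS IH; case: ifP => // /H; by rewrite ltnNge leq_addr.
Qed.

Definition bnd (A : {fset nat}) := \max_(i <- enum_fset A) i.
Definition Ff A := Gf A (bnd A).

Lemma Gf_bound A M N : (forall i, i \in A -> i <= M) -> (forall i, i \in A -> i <= N) ->
  Gf A M = Gf A N.
Proof.
move=> HM HN.
rewrite -(Gf_ext (maxn M N - M) HM) subnKC ?leq_maxl //.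
by rewrite -(Gf_ext (maxn M N - N) HN) subnKC ?leq_maxr.
Qed.

Lemma Ff_tbls p w : Ff (tbls_label e p w) = gls_label e l0 uplab p w.
Proof.
rewrite /Ff (Gf_bound (N := size p)).
- apply: Gf_gls => i hi; by rewrite tbls_mem hi.
- move=> i hi; rewrite /bnd; have := @leq_bigmax_seq _ (enum_fset (tbls_label e p w)) xpredT id i hi isT; by [].
- by move=> i; rewrite tbls_mem => /andP [/andP [_ ->]].
Qed.

End Gen.

Theorem theorem9 (V : finType) (e : rel V) (HG : simple_graph e)
  (T : seq V -> Prop) (HT : forall s, T s -> ordering s) :
  (exists lt : {fset nat} -> {fset nat} -> Prop,
     strict_partial_order lt /\
     (forall s, T s <-> exists tau, ordering tau /\ tbls_output e lt tau s))
  <->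
  (exists (L : Type) (lt : L -> L -> Prop) (l0 : L) (uplab : L -> nat -> L),
     strict_partial_order lt /\
     (forall s, T s <-> gls_output e lt l0 uplab s)).
Proof.
split.
- move=> [lt [spo H]].
  exists {fset nat}, lt, fset0, (fun l i => l `|` [fset i]); split => // s.
  rewrite H; exact: (iff_sym (outG_iff lt (tbls_label e) s)).
- move=> [L [lt [l0 [uplab [[irr tr] H]]]]].
  exists (fun A B => lt (Ff l0 uplab A) (Ff l0 uplab B)); split.
    split; [move=> x; exact: irr | move=> x y z; exact: tr].
  move=> s; rewrite H.
  have -> : gls_output e lt l0 uplab s <->
     outG (fun A B => lt (Ff l0 uplab A) (Ff l0 uplab B)) (tbls_label e) s.
    apply: outG_ext => p x y; by rewrite !Ff_tbls.
  exact: outG_iff.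
Qed.
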